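(* Let $u$ be a drift function and $\alpha>0$. Then for every $f\in\mathcal E^1_u$ and every $x\in\mathbf X$, \[\frac{1}{n^{1+\alpha}}f(X_n)\xrightarrow[n\to\infty]{}0\quad\mathbb P_x\text{-a.s. and in }\mathrm L^1(\mathbb P_x).\]
   Context: $(X_n)$ Markov chain on a complete separable metric space $\mathbf X$, $\mathbb P_x$ its law from $x$, $Pf(x)=\mathbb E_xf(X_1)$. $\tau$ is a $\theta$-compatible stopping time ($\mathbb P_x(\tau=0)=0$ and $\mathbb P_x$-a.s. $\tau\ge2\Rightarrow\tau\circ\theta=\tau-1$) with $\mathbb E_x\tau<\infty$ for all $x$; $Qf(x)=\mathbb E_x[f(X_\tau)\mathbf 1_{\tau<\infty}]$. A drift function is a Borel $u:\mathbf X\to[1,\infty)$ such that $u-Pu$ is bounded below and $Qu$, $x\mapsto\mathbb E_x\tau/u(x)$ and $P(u-Pu+B_u)/(u-Pu+B_u)$ are bounded on $\mathbf X$, where $B_u=\sup(Pu-u)+1$. For Borel $v\ge1$, $\mathcal F^p_v$ is the space of Borel $f$ with $\sup|f|^p/v<\infty$; $\mathcal E^p_u:=\mathcal F^p_{u-Pu+B_u}$. *)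

(* Defs.v *)
From HB Require Import structures.
From mathcomp Require Import all_boot all_order all_algebra.
From mathcomp Require Import all_classical all_reals all_analysis measurable_realfun.

Set Implicit Arguments.
Unset Strict Implicit.
Unset Printing Implicit Defensive.

Import Order.TTheory GRing.Theory Num.Theory.
Import numFieldNormedType.Exports.
Local Open Scope classical_set_scope.
Local Open Scope ring_scope.

Definition borelT (T : ptopologicalType) := g_sigma_algebraType (@open T).

Definition separable_space (T : topologicalType) : Prop :=
  exists S : set T, countable S /\ dense S.

Section MarkovSetting.
Context {R : realType} {dX dO : measure_display}
  {X : measurableType dX} {Om : measurableType dO}.

Definition natfilt (Xn : nat -> Om -> X) (n : nat) : set (set Om) :=
  <<s [set A | exists k, (k <= n)%N /\
        exists2 B, measurable B & A = Xn k @^-1` B] >>.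

(* (Om, Xn, theta, (P x)_x) is the Markov chain with laws P_x, where
   theta is the shift operator: X_n o theta = X_{n+1}, P_x(X_0 = x) = 1,
   x |-> P_x(B) is measurable, and the (simple) Markov property holds:
   for every A in F_n and measurable B,
   P_x(A /\ theta^{-n} B) = E_x[1_A P_{X_n}(B)]. *)
Definition markov_chain (Xn : nat -> Om -> X) (theta : Om -> Om)
    (P : X -> probability Om R) : Prop :=
  [/\ (forall n, measurable_fun setT (Xn n)) /\ measurable_fun setT theta,
      (forall n w, Xn n.+1 w = Xn n (theta w)),
      (forall x B, measurable B ->
          P x (Xn 0 @^-1` B) = ((x \in B)%:R)%:E),
      (forall B, measurable B -> measurable_fun setT ((fun x => P x B) : X -> \bar R)) &
      (forall x n A B, natfilt Xn n A -> measurable B ->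
          P x (A `&` (iter n theta) @^-1` B) =
          (\int[P x]_(w in A) P (Xn n w) B)%E)].

(* stopping times valued in N u {oo} (None = +oo) *)
Definition stopping_time (Xn : nat -> Om -> X) (tau : Om -> option nat) :=
  forall n, natfilt Xn n [set w | tau w = Some n].

Definition theta_compatible (theta : Om -> Om) (tau : Om -> option nat)
    (P : X -> probability Om R) :=
  forall x, P x [set w | tau w = Some 0%N] = 0%E /\
    {ae P x, forall w, match tau w with
                       | Some k => (2 <= k)%N -> tau (theta w) = Some k.-1
                       | None => tau (theta w) = None
                       end}.

Definition tauE (t : option nat) : \bar R :=
  if t is Some k then (k%:R)%:E else +oo%E.

Definition Etau (tau : Om -> option nat) (P : X -> probability Om R) (x : X)
  : \bar R := (\int[P x]_w tauE (tau w))%E.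

Definition Pop (Xn : nat -> Om -> X) (P : X -> probability Om R)
    (f : X -> R) (x : X) : \bar R := (\int[P x]_w (f (Xn 1%N w))%:E)%E.

Definition Qop (Xn : nat -> Om -> X) (tau : Om -> option nat)
    (P : X -> probability Om R) (f : X -> R) (x : X) : \bar R :=
  (\int[P x]_w (if tau w is Some k then (f (Xn k w))%:E else 0%E))%E.

Definition Bu (Xn : nat -> Om -> X) (P : X -> probability Om R) (u : X -> R)
  : \bar R := (ereal_sup (range (fun x => Pop Xn P u x - (u x)%:E)) + 1)%E.

(* u - Pu + B_u (real valued whenever u is a drift function) *)
Definition wu (Xn : nat -> Om -> X) (P : X -> probability Om R) (u : X -> R)
  (x : X) : R := u x - fine (Pop Xn P u x) + fine (Bu Xn P u).

Definition drift_function (Xn : nat -> Om -> X) (tau : Om -> option nat)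
    (P : X -> probability Om R) (u : X -> R) : Prop :=
  [/\ measurable_fun setT u /\ (forall x, 1 <= u x),
      (exists c : R, forall x, (c%:E <= (u x)%:E - Pop Xn P u x)%E),
      (exists c : R, forall x, (Qop Xn tau P u x <= c%:E)%E),
      (exists c : R, forall x, (Etau tau P x <= c%:E * (u x)%:E)%E) &
      (exists c : R, forall x,
          (Pop Xn P (wu Xn P u) x <= c%:E * (wu Xn P u x)%:E)%E)].

Definition Fspace (p : R) (v : X -> R) (f : X -> R) : Prop :=
  measurable_fun setT f /\ exists c : R, forall x, `|f x| `^ p <= c * v x.

Definition Espace (Xn : nat -> Om -> X) (P : X -> probability Om R)
    (p : R) (u : X -> R) (f : X -> R) : Prop := Fspace p (wu Xn P u) f.

End MarkovSetting.

(* Main.v *)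
Require Import Defs.
From HB Require Import structures.
From mathcomp Require Import all_boot all_order all_algebra.
From mathcomp Require Import all_classical all_reals all_analysis measurable_realfun.
Import Order.TTheory GRing.Theory Num.Theory.
Import numFieldNormedType.Exports.
Local Open Scope classical_set_scope.
Local Open Scope ring_scope.
From mathcomp Require Import ring lra.
Section Key.
Import HBNNSimple.
Local Open Scope ereal_scope.

Lemma key_integral d d' (Z : measurableType d) (Om : measurableType d')
  (R : realType) (mu : {measure set Z -> \bar R}) (nu : {measure set Om -> \bar R})
  (k : Om -> {measure set Z -> \bar R})
  (mk : forall U, measurable U -> measurable_fun setT (k ^~ U))
  (H : forall E, measurable E -> mu E = \int[nu]_w k w E)
  (f : Z -> \bar R) : (forall z, 0 <= f z) -> measurable_fun setT f ->
  \int[mu]_z f z = \int[nu]_w \int[k w]_z f z.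
Proof.
have integral_kcomp_indic E (mE : measurable E) :
  \int[mu]_z (\1_E z)%:E = \int[nu]_y (\int[k y]_z (\1_E z)%:E).
  rewrite integral_indic// setIT H//.
  by apply: eq_integral => y _; rewrite integral_indic// setIT.
have integral_kcomp_nnsfun (g : {nnsfun Z >-> R}) :
    \int[mu]_z (g z)%:E = \int[nu]_y (\int[k y]_z (g z)%:E).
  under [in LHS]eq_integral do rewrite fimfunE -fsumEFin//.
  rewrite ge0_integral_fsum//; last 2 first.
    - by move=> r; exact/measurable_EFinP/measurableT_comp.
    - by move=> r z _; rewrite EFinM nnfun_muleindic_ge0.
  under [in RHS]eq_integral.
    move=> y _.
    under eq_integral.
      by move=> z _; rewrite fimfunE -fsumEFin//; over.
    rewrite /= ge0_integral_fsum//; last 2 first.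
      - by move=> r; exact/measurable_EFinP/measurableT_comp.
      - by move=> r z _; rewrite EFinM nnfun_muleindic_ge0.
    under eq_fsbigr.
      move=> r _.
      rewrite (integralZl_indic _ (fun r => g @^-1` [set r]))//; last first.
        by move=> r0; rewrite preimage_nnfun0.
      rewrite integral_indic// setIT.
      over.
    over.
  rewrite /= ge0_integral_fsum//; last 2 first.
    - move=> r; apply: measurable_funeM.
      exact: (mk (g @^-1` [set r])).
    - move=> n y _.
      have := mulemu_ge0 (fun n => g @^-1` [set n]).
      by apply; exact: preimage_nnfun0.
  apply: eq_fsbigr => r _.
  rewrite (integralZl_indic _ (fun r => g @^-1` [set r]))//; last first.
    exact: preimage_nnfun0.
  rewrite /= integral_kcomp_indic//.
  have [r0|r0] := leP 0%R r.
    rewrite ge0_integralZl//.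
      by under eq_integral do rewrite integral_indic// setIT.
    exact: (mk (g @^-1` [set r])).
  rewrite integral0_eq ?mule0.
    by rewrite integral0_eq// => y _; rewrite preimage_nnfun0// measure0 mule0.
  by move=> y _; rewrite integral0_eq// => z _; rewrite preimage_nnfun0// indic0.
move=> f0 mf.
pose f_ := nnsfun_approx measurableT mf.
transitivity (\int[mu]_z (lim ((f_ n z)%:E @[n --> \oo]))).
  by apply/eq_integral => z _; apply/esym/cvg_lim => //=; exact: cvg_nnsfun_approx.
rewrite monotone_convergence//; last 3 first.
  by move=> n; exact/measurable_EFinP.
  by move=> n z _; rewrite lee_fin.
  by move=> z _ a b ab; rewrite lee_fin; exact/lefP/nd_nnsfun_approx.
rewrite (_ : (fun _ => _) =
    (fun n => \int[nu]_y (\int[k y]_z (f_ n z)%:E)))//; last first.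
  by apply/funext => n; rewrite integral_kcomp_nnsfun.
transitivity (\int[nu]_y lim ((\int[k y]_z (f_ n z)%:E) @[n --> \oo])).
  rewrite -monotone_convergence//; last 3 first.
  - move=> n; apply: measurable_fun_integral_kernel => //.
    + by move=> z; rewrite lee_fin.
    + exact/measurable_EFinP.
  - by move=> n y _; apply: integral_ge0 => // z _; rewrite lee_fin.
  - move=> y _ a b ab; apply: ge0_le_integral => //.
    + by move=> z _; rewrite lee_fin.
    + exact/measurable_EFinP.
    + exact/measurable_EFinP.
    + by move=> z _; rewrite lee_fin; exact/lefP/nd_nnsfun_approx.
apply: eq_integral => y _; rewrite -monotone_convergence//; last 3 first.
  - by move=> n; exact/measurable_EFinP.
  - by move=> n z _; rewrite lee_fin.
  - by move=> z _ a b ab; rewrite lee_fin; exact/lefP/nd_nnsfun_approx.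
by apply: eq_integral => z _; apply/cvg_lim => //; exact: cvg_nnsfun_approx.
Qed.
End Key.
Section Markov.
Local Open Scope ereal_scope.
Context (R : realType) (T : completePseudoMetricType R)
  (dO : measure_display) (Om : measurableType dO)
  (Xn : nat -> Om -> borelT T) (theta : Om -> Om)
  (P : borelT T -> probability Om R).
Hypothesis hM : markov_chain Xn theta P.

Lemma Xshift n w : Xn n.+1 w = Xn 1 (iter n theta w).
Proof.
case: hM => _ hs _ _ _.
elim: n w => [//|n IH] w.
by rewrite hs IH iterSr.
Qed.

Lemma mXn n : measurable_fun setT (Xn n).
Proof. by case: hM => -[] + _ _ _ _ _. Qed.

Lemma markov_int n x (g : borelT T -> \bar R) : (forall y, 0 <= g y) ->
  measurable_fun setT g ->
  \int[P x]_w g (Xn n.+1 w) = \int[P x]_w \int[P (Xn n w)]_v g (Xn 1 v).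
Proof.
move=> g0 mg.
case: hM => _ _ _ hmeas hmk.
have mX1U U : measurable U -> measurable (Xn 1 @^-1` U).
  by move=> mU; rewrite -[X in measurable X]setTI; exact: mXn.
have -> : \int[P x]_w g (Xn n.+1 w) =
    \int[pushforward (P x) (Xn n.+1)]_y g y.
  by rewrite ge0_integral_pushforward//; exact: mXn.
rewrite (@key_integral _ _ _ _ _ (pushforward (P x) (Xn n.+1)) (P x)
   (fun w => pushforward (P (Xn n w)) (Xn 1))).
all: try (by move=> ?; exact: mXn); try (by exact: mXn).
- move=> H1; apply: eq_integral => w _.
  by rewrite ge0_integral_pushforward//; exact: mXn.
- move=> H1 U mU /=; rewrite /pushforward.
  apply: (measurableT_comp (hmeas _ (mX1U _ mU))).
  exact: mXn.
- move=> H1 H0 E mE; rewrite /pushforward /=.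
  transitivity (P x (setT `&` iter n theta @^-1` (Xn 1 @^-1` E))).
    congr (P x _); rewrite setTI; apply/seteqP; split => w /=; by rewrite (Xshift n w).
  rewrite hmk//.
    rewrite -setC0; apply: sigma_algebraC; exact: sigma_algebra0.
  exact: mX1U.
- by [].
- by [].
Qed.
End Markov.
Section RealHelpers.
Context (R : realType).

Lemma powR_expR (x r : R) : 0 < x -> x `^ r = expR (r * ln x).
Proof. by move=> x0; rewrite /powR gt_eqF. Qed.

Lemma pseries_step (a : R) (m : nat) : 0 < a ->
  a * ((m.+2%:R) `^ (1 + a))^-1 <=
  ((m.+1%:R) `^ a)^-1 - ((m.+2%:R) `^ a)^-1.
Proof.
move=> a0.
have h1 : (0:R) < m.+1%:R by rewrite ltr0n.
have h2 : (0:R) < m.+2%:R by rewrite ltr0n.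
rewrite !powR_expR// -!expRN.
set p := ln (m.+1%:R : R); set q := ln (m.+2%:R : R).
have ep : expR p = m.+1%:R by rewrite lnK// posrE.
have eq : expR q = m.+2%:R by rewrite lnK// posrE.
have eNq : expR (- q) = (m.+2%:R)^-1 by rewrite expRN eq.
have hpq : p - q <= - expR (- q).
  have := expR_ge1Dx (p - q).
  rewrite expRB ep eq eNq => h.
  have : (m.+1%:R / m.+2%:R : R) = 1 - (m.+2%:R)^-1.
    by field; rewrite gt_eqF.
  move=> e; rewrite e in h.
by rewrite lerD2l in h.
have e1 : expR (- (a * p)) = expR (- (a * q)) * expR (a * (q - p)).
  by rewrite -expRD; congr expR; ring.
have e2 : expR (- ((1 + a) * q)) = expR (- (a * q)) * expR (- q).
  by rewrite -expRD; congr expR; ring.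
rewrite e1 e2.
have := expR_ge1Dx (a * (q - p)).
have := expR_gt0 (- (a * q)).
have := expR_gt0 (- q).
move: hpq.
generalize (expR (- (a * q))) (expR (- q)) (expR (a * (q - p))) => E F G hpq F0 E0 hG.
have h3 : E * (1 + a * (q - p)) <= E * G by rewrite ler_pM2l.
have h4 : a * F <= a * (q - p).
  apply: ler_wpM2l; lra.
have h5 : E * (a * F) <= E * (a * (q - p)) by rewrite ler_pM2l.
have -> : a * (E * F) = E * (a * F) by ring.
have : E * (1 + a * (q - p)) = E + E * (a * (q - p)) by ring.
lra.
Qed.

Lemma pseries_bound (a : R) (N : nat) : 0 < a ->
  \sum_(m < N) ((m.+1%:R) `^ (1 + a))^-1 <= 1 + a^-1.
Proof.
move=> a0.
suff H : forall N, a * \sum_(m < N) ((m.+2%:R) `^ (1 + a))^-1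
   <= 1 - ((N.+1%:R) `^ a)^-1.
  case: N => [|N]; first by rewrite big_ord0; have := invr_gt0 a; lra.
  rewrite big_ord_recl /= powR1 invr1.
  under eq_bigr do rewrite /bump /=.
  have := H N; have := powR_gt0 a (ltr0n R N.+1 : 0 < N.+1%:R).
  move=> h0 h.
  have : \sum_(i < N) ((i.+2%:R) `^ (1 + a))^-1 <= a^-1.
    rewrite -(ler_pM2l a0) mulfV ?gt_eqF//.
    have := invr_gt0 (N.+1%:R `^ a); lra.
  lra.
elim=> [|n IH]; first by rewrite big_ord0 mulr0 powR1 invr1 subrr.
rewrite big_ord_recr /= mulrDr.
have := @pseries_step a n a0.
lra.
Qed.

Lemma abel_bound (c V G : nat -> R) (b : R) :
  (forall m, c m.+1 <= c m) -> (forall m, 0 <= c m) -> (forall m, 0 <= V m) ->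
  (forall m, G m + V m.+1 = V m + b) -> forall N,
  \sum_(m < N) c m * G m <= c 0%N * V 0%N + `|b| * \sum_(m < N) c m.
Proof.
move=> cdec c0 V0 hG N.
suff H : \sum_(m < N) c m * G m + c N * V N <=
    c 0%N * V 0%N + b * \sum_(m < N) c m.
  have : 0 <= c N * V N by rewrite mulr_ge0.
  have : b * \sum_(m < N) c m <= `|b| * \sum_(m < N) c m.
    by rewrite ler_wpM2r ?ler_norm// sumr_ge0.
  lra.
elim: N => [|n IH]; first by rewrite !big_ord0; lra.
rewrite !big_ord_recr /=.
have hGn := hG n.
have : c n.+1 * V n.+1 <= c n * V n.+1 by rewrite ler_wpM2r.
have e : c n * G n = c n * V n + c n * b - c n * V n.+1.
  have -> : G n = V n + b - V n.+1 by lra.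
  ring.
rewrite e mulrDr.
have : b * c n = c n * b by rewrite mulrC.
lra.
Qed.

Lemma terms_cvg0 (a : nat -> R) (M : R) : (forall n, 0 <= a n) ->
  (forall N, \sum_(n < N) a n <= M) -> a n @[n --> \oo] --> 0.
Proof.
move=> a0 hM; apply: cvg_series_cvg_0.
apply: nondecreasing_is_cvgn.
  apply/nondecreasing_seqP => n; rewrite /series /= big_nat_recr//=.
  by rewrite lerDl.
exists M => _ [n _ <-]; rewrite /series /= big_mkord; exact: hM.
Qed.
End RealHelpers.

Definition kcoef {R : realType} (alpha : R) (n : nat) : R :=
  ((n%:R : R) `^ (1 + alpha))^-1.

Section Drift.
Context (R : realType) (T : completePseudoMetricType R)
  (dO : measure_display) (Om : measurableType dO)
  (Xn : nat -> Om -> borelT T) (theta : Om -> Om)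
  (P : borelT T -> probability Om R) (tau : Om -> option nat)
  (u : borelT T -> R).
Hypothesis hM : markov_chain Xn theta P.
Hypothesis hd : drift_function Xn tau P u.

Let mX n := @mXn _ _ _ _ _ _ _ hM n.
Let pu y := fine (Pop Xn P u y).
Let b := fine (Bu Xn P u).

Lemma u_ge1 y : 1 <= u y.
Proof. by case: hd => -[]. Qed.

Lemma mu_ : measurable_fun setT u.
Proof. by case: hd => -[]. Qed.

Lemma Pu_ge0 y : (0 <= Pop Xn P u y)%E.
Proof. apply: integral_ge0 => w _; rewrite lee_fin; have := u_ge1 (Xn 1 w); lra. Qed.

Lemma Pu_bound : exists c : R, forall y, (Pop Xn P u y - (u y)%:E <= (- c)%:E)%E.
Proof.
case: hd => _ [c hc] _ _ _; exists c => y.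
have := hc y; have := Pu_ge0 y.
case: (Pop Xn P u y) => [r| |] //=.
- rewrite !lee_fin => _ h; lra.
Qed.

Lemma Pu_fin y : Pop Xn P u y = (pu y)%:E.
Proof.
have [c hc] := Pu_bound; have := hc y; have := Pu_ge0 y.
rewrite /pu; case: (Pop Xn P u y) => [r| |] //=.
Qed.

Lemma Bu_fin (x0 : borelT T) : Bu Xn P u = b%:E /\ forall y, pu y - u y <= b - 1.
Proof.
have [c hc] := Pu_bound.
have hub : (ereal_sup (range (fun x => Pop Xn P u x - (u x)%:E)) <= (- c)%:E)%E.
  by apply: ub_ereal_sup => _ [y _ <-]; exact: hc.
have hlb : ((pu x0 - u x0)%:E <= ereal_sup (range (fun x => Pop Xn P u x - (u x)%:E)))%E.
  by apply: ereal_sup_ubound; exists x0 => //; rewrite Pu_fin.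
have Bf : Bu Xn P u = b%:E.
  rewrite /b /Bu; move: hub hlb.
  by case: (ereal_sup _) => [r| |] //=.
split => // y.
have : ((pu y - u y)%:E <= ereal_sup (range (fun x => Pop Xn P u x - (u x)%:E)))%E.
  by apply: ereal_sup_ubound; exists y => //; rewrite Pu_fin.
move: Bf; rewrite /Bu.
case: (ereal_sup _) => [r| |] //=.
- by move=> [<-]; rewrite lee_fin; lra.
Qed.

Lemma mPu : measurable_fun setT (Pop Xn P u).
Proof.
case: hM => _ _ _ hmeas _.
apply: (@measurable_fun_integral_kernel _ _ _ _ _ P).
- by [].
- by move=> z; change (0%:E <= (u (Xn 1 z))%:E)%E; rewrite lee_fin; have := u_ge1 (Xn 1 z); lra.
- apply/measurable_EFinP; apply: measurableT_comp; first exact: mu_.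
  exact: mX.
Qed.

Lemma mpu : measurable_fun setT pu.
Proof. apply: measurableT_comp; [exact: fine_measurable| exact: mPu]. Qed.

Lemma wuE y : wu Xn P u y = u y - pu y + b.
Proof. by []. Qed.

Lemma mwu : measurable_fun setT (wu Xn P u).
Proof.
rewrite /wu; apply: measurable_funD; last exact: measurable_cst.
apply: measurable_funB; [exact: mu_| exact: mpu].
Qed.

Lemma wu_ge1 (x0 : borelT T) y : 1 <= wu Xn P u y.
Proof. have [_ h] := Bu_fin x0; rewrite wuE; have := h y; lra. Qed.

Lemma int_add_const (mu : probability Om R) (g : Om -> R) (c : R) :
  measurable_fun setT g -> (forall v, 0 <= g v) -> (forall v, 0 <= g v + c) ->
  (\int[mu]_v (g v + c)%:E = \int[mu]_v (g v)%:E + c%:E)%E.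
Proof.
move=> mg g0 gc0.
have [c0|c0] := leP 0 c.
  under eq_integral do rewrite EFinD.
  rewrite ge0_integralD//.
  - rewrite integral_cst//; congr (_ + _)%E; rewrite -[RHS]mule1; congr (_ * _)%E.
    exact: probability_setT.
  all: try (by move=> v _; rewrite lee_fin); try (exact/measurable_EFinP).
have -> : (\int[mu]_v (g v)%:E = \int[mu]_v ((g v + c)%:E + (- c)%:E))%E.
  by apply: eq_integral => v _; rewrite -EFinD; congr EFin; ring.
rewrite ge0_integralD//.
- rewrite integral_cst// (_ : (_ * _)%E = (- c)%:E); last first.
    rewrite -[RHS]mule1; congr (_ * _)%E; exact: probability_setT.
  rewrite -addeA -EFinD.
  by rewrite addNr adde0.
- by move=> v _; rewrite lee_fin.
- apply/measurable_EFinP; apply: measurable_funD => //; exact: measurable_cst.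
- by move=> v _; rewrite lee_fin; lra.
Qed.

Lemma recurrence (x0 : borelT T) x n :
  (\int[P x]_v (wu Xn P u (Xn n v))%:E + \int[P x]_v (u (Xn n.+1 v))%:E =
   \int[P x]_v (u (Xn n v))%:E + b%:E)%E.
Proof.
have [_ hb] := Bu_fin x0.
rewrite (@markov_int _ _ _ _ _ _ _ hM n x (fun y => (u y)%:E)); last 2 first.
- by move=> y; rewrite lee_fin; have := u_ge1 y; lra.
- by apply/measurable_EFinP; exact: mu_.
have -> : (\int[P x]_w \int[P (Xn n w)]_v (u (Xn 1 v))%:E =
    \int[P x]_w (pu (Xn n w))%:E)%E.
  by apply: eq_integral => w _; rewrite -Pu_fin.
rewrite -ge0_integralD//; last 4 first.
- by move=> v _; rewrite lee_fin; have := wu_ge1 x0 (Xn n v); lra.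
- by apply/measurable_EFinP; apply: measurableT_comp; [exact: mwu| exact: mX].
- by move=> v _; rewrite lee_fin -lee_fin -Pu_fin; exact: Pu_ge0.
- by apply/measurable_EFinP; apply: measurableT_comp; [exact: mpu| exact: mX].
rewrite -int_add_const.
- by apply: eq_integral => v _; rewrite -EFinD wuE; congr EFin; ring.
- by apply: measurableT_comp; [exact: mu_| exact: mX].
- by move=> v; have := u_ge1 (Xn n v); lra.
- move=> v; have := hb (Xn n v); have := u_ge1 (Xn n v).
  have : 0 <= pu (Xn n v) by rewrite -lee_fin -Pu_fin; exact: Pu_ge0.
  lra.
Qed.

Lemma nneseries_le_M (a : nat -> R) (M : R) : (forall n, 0 <= a n) ->
  (forall N, \sum_(n < N) a n <= M) ->
  (\sum_(0 <= n <oo) (a n)%:E <= M%:E)%E.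
Proof.
move=> a0 hMb; apply: lime_le.
  by apply: is_cvg_nneseries => n _ _; rewrite lee_fin.
by apply: nearW => N; rewrite sumEFin lee_fin big_mkord; exact: hMb.
Qed.

Variables (alpha : R) (f : borelT T -> R).
Hypothesis ha : 0 < alpha.
Hypothesis hf : Espace Xn P 1 u f.

Local Notation k := (kcoef alpha).

Lemma k0 : k 0 = 0.
Proof. rewrite /kcoef powR0 ?invr0// gt_eqF//.
have ha0 := ha; lra. Qed.

Lemma k_ge0 n : 0 <= k n.
Proof. by rewrite /kcoef invr_ge0 powR_ge0. Qed.

Lemma k1 : k 1 = 1.
Proof. by rewrite /kcoef powR1 invr1. Qed.

Lemma k_dec m : k m.+2 <= k m.+1.
Proof.
rewrite /kcoef lef_pV2 ?posrE ?powR_gt0 ?ltr0n//.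
have ha0 := ha; by apply: ge0_ler_powR; rewrite ?nnegrE ?ler0n ?ler_nat//; lra.
Qed.

Variable x : borelT T.
Local Notation Ui n := (\int[P x]_v (u (Xn n v))%:E)%E.
Local Notation Wi n := (\int[P x]_v (wu Xn P u (Xn n v))%:E)%E.

Lemma Ui_ge0 n : (0 <= Ui n)%E.
Proof. by apply: integral_ge0 => v _; rewrite lee_fin; have := u_ge1 (Xn n v); lra. Qed.

Lemma Wi_ge0 n : (0 <= Wi n)%E.
Proof. by apply: integral_ge0 => v _; rewrite lee_fin; have := wu_ge1 x (Xn n v); lra. Qed.

Lemma fin_step m : Ui m.+1 \is a fin_num ->
  Wi m.+1 \is a fin_num /\ Ui m.+2 \is a fin_num.
Proof.
move=> hU.
have hr := recurrence x x m.+1.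
have hC : (Ui m.+1 + b%:E)%E \is a fin_num by rewrite fin_numD hU.
rewrite -hr in hC.
have W0 := Wi_ge0 m.+1; have U0 := Ui_ge0 m.+2.
move: hC; rewrite ge0_fin_numE; last exact: adde_ge0.
move=> hC; rewrite !ge0_fin_numE //; split.
- exact: le_lt_trans (leeDl _ U0) hC.
- by apply: le_lt_trans hC; rewrite addeC; exact: leeDl.
Qed.

Lemma fin_all m : Ui m.+1 \is a fin_num /\ Wi m.+1 \is a fin_num.
Proof.
elim: m => [|m [hU hW]].
  have h1 : Ui 1 \is a fin_num.
    by rewrite (_ : Ui 1 = Pop Xn P u x)// Pu_fin.
  by split => //; have [] := fin_step 0 h1.
have [_ h2] := fin_step m hU.
by split => //; have [] := fin_step m.+1 h2.
Qed.

Lemma VG m : fine (Wi m.+1) + fine (Ui m.+2) = fine (Ui m.+1) + b.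
Proof.
have hr := recurrence x x m.+1.
have [hU hW] := fin_all m; have [hU2 _] := fin_all m.+1.
by rewrite -fineD// hr fineD.
Qed.

Local Notation aseq n := (kcoef alpha n * fine (Wi n)).
Local Notation Mb := (fine (Ui 1) + `|b| * (1 + alpha^-1)).

Lemma aseq_ge0 n : 0 <= aseq n.
Proof. by rewrite mulr_ge0 ?k_ge0// fine_ge0// Wi_ge0. Qed.

Lemma partial_bound N : \sum_(n < N) aseq n <= Mb.
Proof.
have ha0 := ha.
have hV0 : 0 <= fine (Ui 1) by rewrite fine_ge0// Ui_ge0.
have hB : 0 <= `|b| * (1 + alpha^-1).
  by rewrite mulr_ge0// addr_ge0// invr_ge0; lra.
case: N => [|N]; first by rewrite big_ord0; lra.
rewrite big_ord_recl /= k0 mul0r add0r.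
under eq_bigr do rewrite /bump /=.
have := @abel_bound R (fun m => kcoef alpha m.+1) (fun m => fine (Ui m.+1))
  (fun m => fine (Wi m.+1)) b.
move=> /(_ (fun m => k_dec m) (fun m => k_ge0 m.+1)).
move=> /(_ (fun m => fine_ge0 (Ui_ge0 m.+1)) VG N) /=.
rewrite k1 mul1r => h.
apply: (le_trans h); rewrite lerD2l; apply: ler_wpM2l => //.
exact: pseries_bound.
Qed.

Lemma mh n : measurable_fun setT (fun v => (kcoef alpha n * wu Xn P u (Xn n v))%:E).
Proof.
apply/measurable_EFinP; apply: measurable_funM; first exact: measurable_cst.
by apply: measurableT_comp; [exact: mwu| exact: mX].
Qed.

Lemma int_h n :
  (\int[P x]_v ((kcoef alpha n * wu Xn P u (Xn n v))%:E) = (aseq n)%:E)%E.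
Proof.
under eq_integral do rewrite EFinM.
rewrite ge0_integralZl//; last 3 first.
- by apply/measurable_EFinP; apply: measurableT_comp; [exact: mwu| exact: mX].
- by move=> v _; rewrite lee_fin; have := wu_ge1 x (Xn n v); lra.
- by rewrite lee_fin k_ge0.
case: n => [|m]; first by rewrite k0 mul0e mul0r.
have [_ hW] := fin_all m.
by rewrite -{1}(fineK hW) -EFinM.
Qed.

Lemma main_x :
  {ae P x, forall w,
       (fun n : nat => kcoef alpha n * f (Xn n w)) @ \oo --> 0}
    /\ (forall n : nat, (P x).-integrable setT
          (fun w => (kcoef alpha n * f (Xn n w))%:E))
    /\ (fun n : nat =>
          (\int[P x]_w (`|kcoef alpha n * f (Xn n w)|)%:E)%E)
         @ \oo --> 0%E.
Proof.
have ha0 := ha.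
have [mf [C hC]] := hf.
have hC' y : `|f y| <= C * wu Xn P u y.
  by have := hC y; rewrite powRr1.
have C0 : 0 <= C.
  by have := hC' x; have := wu_ge1 x x; have := normr_ge0 (f x); nra.
have bound n y : `|kcoef alpha n * f y| <= C * (kcoef alpha n * wu Xn P u y).
  rewrite normrM ger0_norm ?k_ge0//.
  have := k_ge0 n; have := hC' y; have := normr_ge0 (f y); nra.
have mfn n : measurable_fun setT (fun v => kcoef alpha n * f (Xn n v)).
  apply: measurable_funM; first exact: measurable_cst.
  by apply: measurableT_comp; [exact: mf| exact: mX].
have Lbound n : (\int[P x]_w (`|kcoef alpha n * f (Xn n w)|)%:E <=
    (C * aseq n)%:E)%E.
  rewrite EFinM -int_h -ge0_integralZl//; first last.
  - by move=> v _; rewrite lee_fin mulr_ge0 ?k_ge0//; have := wu_ge1 x (Xn n v); lra.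
  - exact: mh.
  apply: ge0_le_integral => //.
  - apply/measurable_EFinP; apply: measurableT_comp => //; exact: mfn.
  - by apply: measurable_funeM; exact: mh.
  - by move=> v _; rewrite -EFinM lee_fin.
split.
  pose F := fun v => (\sum_(0 <= n <oo) (kcoef alpha n * wu Xn P u (Xn n v))%:E)%E.
  have h0 n v : (0%R <= (kcoef alpha n * wu Xn P u (Xn n v))%:E)%E.
    by rewrite lee_fin mulr_ge0 ?k_ge0//; have := wu_ge1 x (Xn n v); lra.
  have mF : measurable_fun setT F.
    apply: ge0_emeasurable_sum.
    - by move=> n v _ _; exact: h0.
    - by move=> n _; exact: mh.
  have intF : (\int[P x]_v F v <= Mb%:E)%E.
    rewrite /F (@integral_nneseries _ _ _ (P x) setT measurableT (fun n v => (kcoef alpha n * wu Xn P u (Xn n v))%:E)); last 2 first.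
    - by move=> n; exact: mh.
    - by move=> n v _; exact: h0.
    rewrite (eq_eseriesr (g := fun n => (aseq n)%:E)); last by move=> n _; exact: int_h.
    exact: nneseries_le_M aseq_ge0 partial_bound.
  have iF : (P x).-integrable setT F.
    apply/integrableP; split => //.
    under eq_integral do rewrite gee0_abs ?nneseries_ge0//.
    exact: le_lt_trans intF (ltry _).
  apply: filterS (integrable_ae measurableT iF) => v /(_ I) Ffin.
  have a0 n : 0 <= kcoef alpha n * wu Xn P u (Xn n v).
    by rewrite -lee_fin; exact: h0.
  have ps N : \sum_(n < N) (kcoef alpha n * wu Xn P u (Xn n v)) <= fine (F v).
    rewrite -lee_fin fineK// -sumEFin.
    rewrite (_ : (\sum_(i < N) _)%R = (\sum_(0 <= i < N) (kcoef alpha i * wu Xn P u (Xn i v))%:E)%R); last by rewrite big_mkord.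
    rewrite /F; exact: nneseries_lim_ge.
  have ac := @terms_cvg0 R _ _ a0 ps.
  apply: (@squeeze_cvgr _ _ _ _ (fun n => - (C * (kcoef alpha n * wu Xn P u (Xn n v))))
    (fun n => C * (kcoef alpha n * wu Xn P u (Xn n v)))).
  - apply: nearW => n; rewrite -ler_norml; exact: bound.
  - rewrite -oppr0; apply: cvgN; rewrite -(mulr0 C); exact: cvgMr.
  - rewrite -(mulr0 C); exact: cvgMr.
split.
  move=> n; apply/integrableP; split.
    by apply/measurable_EFinP; exact: mfn.
  under eq_integral do rewrite abse_EFin.
  exact: le_lt_trans (Lbound n) (ltry _).
apply: (@squeeze_cvge _ _ _ _ (fun=> 0%E) _ (fun n => (C * aseq n)%:E)).
- apply: nearW => n; rewrite Lbound andbT.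
  by apply: integral_ge0 => v _; rewrite lee_fin.
- exact: cvg_cst.
- apply: cvg_EFin; first by apply: nearW.
  rewrite (_ : 0 = C * 0); last by rewrite mulr0.
  apply: cvgMr.
  exact: (@terms_cvg0 R _ _ aseq_ge0 partial_bound).
Qed.

End Drift.

Theorem mainTheorem17 (R : realType) (T : completePseudoMetricType R)
  (dO : measure_display) (Om : measurableType dO)
  (Xn : nat -> Om -> borelT T) (theta : Om -> Om)
  (P : borelT T -> probability Om R) (tau : Om -> option nat)
  (u : borelT T -> R) (alpha : R) (f : borelT T -> R) :
  hausdorff_space T -> separable_space T ->
  markov_chain Xn theta P ->
  stopping_time Xn tau -> theta_compatible theta tau P ->
  (forall x, (Etau tau P x < +oo)%E) ->
  drift_function Xn tau P u ->
  0 < alpha ->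
  Espace Xn P 1 u f ->
  forall x : borelT T,
    {ae P x, forall w,
       (fun n : nat => (n%:R `^ (1 + alpha))^-1 * f (Xn n w)) @ \oo --> 0}
    /\ (forall n : nat, (P x).-integrable setT
          (fun w => ((n%:R `^ (1 + alpha))^-1 * f (Xn n w))%:E))
    /\ (fun n : nat =>
          (\int[P x]_w (`|(n%:R `^ (1 + alpha))^-1 * f (Xn n w)|)%:E)%E)
         @ \oo --> 0%E.
Proof.
move=> _ _ hM _ _ _ hd ha hf x.
exact (@main_x _ _ _ _ _ _ _ _ _ hM hd _ _ ha hf x).
Qed.
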